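(* There are universal constants $C,C'$ such that for all $A<n$ (with $n$ an integer) and all $\Lambda$ with $A\pm\Lambda$ integers, $|\Lambda|\le A-1$, \[ \Pr\bigl[BINGO(A+\Lambda,A-\Lambda;n,n)\bigr]\le\frac{C}{\sqrt{n-A}}e^{-\Lambda^2/(n-A)}, \] and, if moreover $\Lambda\neq0$, this is at most $\frac{C'}{|\Lambda|}e^{-\Lambda^2/(2(n-A))}$.
   Context: Fix $\alpha>1$. Consider the Markov chain on $\mathbb N\times\mathbb N$ which from state $(i,j)$ moves to $(i+1,j)$ with probability $i^\alpha/(i^\alpha+j^\alpha)$ and to $(i,j+1)$ with probability $j^\alpha/(i^\alpha+j^\alpha)$. For states $(a,b)$, $(c,d)$, $BINGO(a,b;c,d)$ denotes the event that this chain, started at state $(a,b)$, visits the state $(c,d)$. *)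

(* Defs.v *)
From Stdlib Require Import Reals Arith.
Open Scope R_scope.

(* i^alpha for natural i (with 0^alpha = 0, as alpha > 0). *)
Definition npow (alpha : R) (i : nat) : R :=
  match i with O => 0 | _ => Rpower (INR i) alpha end.

Definition pstepR (alpha : R) (i j : nat) : R :=
  npow alpha i / (npow alpha i + npow alpha j).
Definition pstepU (alpha : R) (i j : nat) : R :=
  npow alpha j / (npow alpha i + npow alpha j).

Fixpoint at_after (alpha : R) (k a b c d : nat) : R :=
  match k with
  | O => if andb (Nat.eqb a c) (Nat.eqb b d) then 1 else 0
  | S k' => pstepR alpha a b * at_after alpha k' (S a) b c d
            + pstepU alpha a b * at_after alpha k' a (S b) c d
  end.

(* Pr[BINGO(a,b;c,d)]: since each step increases i+j by exactly one, the chain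
   visits (c,d) iff it is at (c,d) at time (c+d)-(a+b). *)
Definition bingo (alpha : R) (a b c d : nat) : R :=
  if Nat.leb (a + b) (c + d) then at_after alpha (c + d - (a + b)) a b c d else 0.

(* Main.v *)
Require Import Defs.
From Stdlib Require Import Reals Lra Lia.
From Coquelicot Require Coquelicot.
Open Scope R_scope.

Module KeyM.
Import Coquelicot.Coquelicot.

Lemma psi_nonneg x : 0 <= x -> (1 - x) * exp (2 * x) <= 1 + x.
Proof.
  intro Hx. destruct (Req_dec x 0) as [->|Hx0].
  { rewrite Rmult_0_r, exp_0. lra. }
  set (f := fun y => (1 + y) - (1 - y) * exp (2 * y)).
  set (f' := fun y => 1 - exp (2 * y) * (1 - 2 * y)).
  destruct (MVT_cor2 f f' 0 x) as [c [Hc1 Hc2]]; [lra| |].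
  { intros c _. apply is_derive_Reals. unfold f, f'.
    auto_derive; [auto|]. ring. }
  assert (f 0 = 0) by (unfold f; rewrite Rmult_0_r, exp_0; ring).
  assert (0 <= f' c).
  { unfold f'. assert (H1 := exp_ineq1_le (- (2 * c))).
    assert (exp (2*c) * exp (- (2*c)) = 1) by (rewrite <- exp_plus; replace (2*c + - (2*c)) with 0 by ring; apply exp_0).
    assert (0 < exp (2*c)) by apply exp_pos. nra. }
  unfold f in *. nra.
Qed.

Lemma key_ratio u v : 0 < v -> v <= u -> v / u <= exp (- (2 * (u - v) / (u + v))).
Proof.
  intros Hv Huv.
  set (x := (u - v) / (u + v)).
  assert (Hx : 0 <= x) by (unfold x; apply Rdiv_le_0_compat; lra).
  pose proof (psi_nonneg x Hx) as H.
  assert (E1 : 1 + x = 2 * u / (u + v)) by (unfold x; field; lra).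
  assert (E2 : 1 - x = 2 * v / (u + v)) by (unfold x; field; lra).
  rewrite E1, E2 in H.
  assert (Hp : exp (- (2 * x)) * exp (2 * x) = 1) by (rewrite <- exp_plus; replace (- (2*x) + 2*x) with 0 by ring; apply exp_0).
  replace (- (2 * (u - v) / (u + v))) with (- (2 * x)) by (unfold x; field; lra).
  assert (0 < exp (2*x)) by apply exp_pos.
  assert (0 < exp (-(2*x))) by apply exp_pos.
  apply (Rmult_le_reg_r u); [lra|]. unfold Rdiv. rewrite Rmult_assoc, Rinv_l by lra.
  assert (2 * v / (u + v) * exp (2 * x) * (u+v) <= 2 * u / (u + v) * (u+v)) by (apply Rmult_le_compat_r; lra).
  replace (2 * v / (u + v) * exp (2 * x) * (u+v)) with (2 * v * exp (2*x)) in H2 by (field; lra).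
  replace (2 * u / (u + v) * (u+v)) with (2 * u) in H2 by (field; lra).
  nra.
Qed.

End KeyM.
Import KeyM.

Lemma Rdiv_le_0_compat a b : 0 <= a -> 0 < b -> 0 <= a / b.
Proof. intros; unfold Rdiv; apply Rmult_le_pos; [auto|left; apply Rinv_0_lt_compat; auto]. Qed.
Lemma fact_pos' n : 0 < INR (Factorial.fact n).
Proof. apply lt_0_INR, Factorial.lt_O_fact. Qed.
Lemma C_nonneg n k : 0 <= C n k.
Proof. unfold C. apply Rdiv_le_0_compat. apply pos_INR. apply Rmult_lt_0_compat; apply fact_pos'. Qed.

Lemma C_n0 m : C m 0 = 1.
Proof. unfold C. rewrite Nat.sub_0_r. simpl. pose proof (fact_pos' m). field. lra. Qed.
Lemma C_nn m : C m m = 1.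
Proof. unfold C. rewrite Nat.sub_diag. simpl. pose proof (fact_pos' m). field. lra. Qed.

Lemma at_after_zero_l alpha K : forall a b c d, (c < a)%nat -> at_after alpha K a b c d = 0.
Proof.
  induction K; intros a b c d H; simpl.
  - destruct (Nat.eqb_spec a c); [lia|]. reflexivity.
  - rewrite IHK by lia. rewrite IHK by lia. ring.
Qed.
Lemma at_after_zero_r alpha K : forall a b c d, (d < b)%nat -> at_after alpha K a b c d = 0.
Proof.
  induction K; intros a b c d H; simpl.
  - destruct (Nat.eqb_spec b d); [lia|]. rewrite Bool.andb_false_r. reflexivity.
  - rewrite IHK by lia. rewrite IHK by lia. ring.
Qed.

Lemma npow_pos alpha a : (1 <= a)%nat -> 0 < npow alpha a.
Proof. intros H. destruct a; [lia|]. unfold npow. unfold Rpower. apply exp_pos. Qed.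

Lemma npow_mono alpha a b : 0 < alpha -> (1 <= b)%nat -> (b <= a)%nat -> npow alpha b <= npow alpha a.
Proof.
  intros Ha Hb Hab. destruct a; [lia|]. destruct b; [lia|]. unfold npow.
  apply Rle_Rpower_l; [lra|]. split; [apply lt_0_INR; lia| apply le_INR; lia].
Qed.

Lemma pstep_sum alpha a b : (1 <= a)%nat -> (1 <= b)%nat -> pstepR alpha a b + pstepU alpha a b = 1.
Proof. intros; unfold pstepR, pstepU. pose proof (npow_pos alpha a H). pose proof (npow_pos alpha b H0). field. lra. Qed.

Lemma half_le x y : 0 < y -> y <= x -> 1/2 <= x/(x+y).
Proof.
  intros. apply Rmult_le_reg_r with (x+y); [lra|].
  replace (x/(x+y)*(x+y)) with x by (field; lra). lra.
Qed.

Lemma pstepR_ge alpha a b : 0 < alpha -> (1 <= b)%nat -> (b <= a)%nat -> 1/2 <= pstepR alpha a b.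
Proof.
  intros. unfold pstepR. pose proof (npow_mono alpha a b H H0 H1). pose proof (npow_pos alpha b H0).
  apply half_le; lra.
Qed.
Lemma pstepU_ge alpha a b : 0 < alpha -> (1 <= a)%nat -> (a <= b)%nat -> 1/2 <= pstepU alpha a b.
Proof.
  intros. unfold pstepU. pose proof (npow_mono alpha b a H H0 H1). pose proof (npow_pos alpha a H0).
  rewrite Rplus_comm. apply half_le; lra.
Qed.
Lemma pstepR_nn alpha a b : (1 <= a)%nat -> (1 <= b)%nat -> 0 <= pstepR alpha a b.
Proof. intros. unfold pstepR. pose proof (npow_pos alpha a H). pose proof (npow_pos alpha b H0). apply Rdiv_le_0_compat; lra. Qed.
Lemma pstepU_nn alpha a b : (1 <= a)%nat -> (1 <= b)%nat -> 0 <= pstepU alpha a b.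
Proof. intros. unfold pstepU. pose proof (npow_pos alpha a H). pose proof (npow_pos alpha b H0). apply Rdiv_le_0_compat; lra. Qed.

Lemma at_after_nn alpha K : forall a b c d, (1 <= a)%nat -> (1 <= b)%nat -> 0 <= at_after alpha K a b c d.
Proof.
  induction K; intros a b c d Ha Hb; simpl.
  - destruct (andb _ _); lra.
  - pose proof (pstepR_nn alpha a b Ha Hb). pose proof (pstepU_nn alpha a b Ha Hb).
    pose proof (IHK (S a) b c d ltac:(lia) Hb). pose proof (IHK a (S b) c d Ha ltac:(lia)).
    apply Rplus_le_le_0_compat; apply Rmult_le_pos; auto.
Qed.

Lemma dom alpha n : 0 < alpha -> forall K a b, (a + b + K = 2 * n)%nat -> (1 <= a)%nat -> (1 <= b)%nat ->
  (a <= n)%nat -> (b <= n)%nat -> at_after alpha K a b n n <= C K (n - a) / 2 ^ K.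
Proof.
  intros Hal K. induction K; intros a b HK Ha Hb Han Hbn.
  - assert (a = n) by lia. assert (b = n) by lia. subst. simpl.
    rewrite Nat.eqb_refl. simpl. rewrite Nat.sub_diag, C_n0. lra.
  - simpl at_after.
    pose proof (pstep_sum alpha a b Ha Hb) as Hs.
    pose proof (pstepR_nn alpha a b Ha Hb). pose proof (pstepU_nn alpha a b Ha Hb).
    assert (P2 : 0 < 2 ^ K) by (apply pow_lt; lra).
    rewrite <- tech_pow_Rmult.
    destruct (Nat.eq_dec a n) as [Ea|Na].
    + subst a. rewrite (at_after_zero_l _ _ (S n)) by lia.
      pose proof (IHK n (S b) ltac:(lia) Ha ltac:(lia) ltac:(lia) ltac:(lia)) as IH.
      rewrite Nat.sub_diag, C_n0 in *.
      pose proof (pstepR_ge alpha n b Hal Hb Hbn).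
      assert (0 <= at_after alpha K n (S b) n n) by (apply at_after_nn; lia).
      replace (1 / (2 * 2 ^ K)) with (1/2 * (1 / 2^K)) by (field; lra).
      assert (pstepU alpha n b <= 1/2) by lra.
      assert (pstepU alpha n b * at_after alpha K n (S b) n n <= 1/2 * (1 / 2^K)) by (apply Rmult_le_compat; lra).
      lra.
    + destruct (Nat.eq_dec b n) as [Eb|Nb].
      * subst b. rewrite (at_after_zero_r _ _ a (S n)) by lia.
        pose proof (IHK (S a) n ltac:(lia) ltac:(lia) Hb ltac:(lia) ltac:(lia)) as IH.
        replace (n - S a)%nat with K in IH by lia. replace (n - a)%nat with (S K) by lia.
        rewrite C_nn in *.
        pose proof (pstepU_ge alpha a n Hal Ha Han).
        assert (0 <= at_after alpha K (S a) n n n) by (apply at_after_nn; lia).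
        replace (1 / (2 * 2 ^ K)) with (1/2 * (1 / 2^K)) by (field; lra).
        assert (pstepR alpha a n * at_after alpha K (S a) n n n <= 1/2 * (1 / 2^K)) by (apply Rmult_le_compat; lra).
        lra.
      * pose proof (IHK (S a) b ltac:(lia) ltac:(lia) Hb ltac:(lia) ltac:(lia)) as IH1.
        pose proof (IHK a (S b) ltac:(lia) Ha ltac:(lia) ltac:(lia) ltac:(lia)) as IH2.
        set (i := (n - S a)%nat) in *.
        replace (n - a)%nat with (S i) in * by lia.
        rewrite <- (pascal K i) by lia.
        pose proof (pascal_step3 K i ltac:(lia)) as Hst.
        set (x := C K i) in *. set (y := C K (S i)) in *.
        assert (0 <= x) by apply C_nonneg.
        assert (0 <= at_after alpha K (S a) b n n) by (apply at_after_nn; lia).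
        assert (0 <= at_after alpha K a (S b) n n) by (apply at_after_nn; lia).
        assert (Hq1 : pstepR alpha a b * at_after alpha K (S a) b n n <= pstepR alpha a b * (x / 2^K)) by (apply Rmult_le_compat_l; lra).
        assert (Hq2 : pstepU alpha a b * at_after alpha K a (S b) n n <= pstepU alpha a b * (y / 2^K)) by (apply Rmult_le_compat_l; lra).
        assert (Hgoal : pstepR alpha a b * x + pstepU alpha a b * y <= (x + y) / 2).
        { destruct (Compare_dec.le_lt_dec b a) as [Hba|Hab].
          - pose proof (pstepR_ge alpha a b Hal Hb Hba).
            assert (x <= y).
            { rewrite Hst. rewrite S_INR, minus_INR by lia.
              assert (INR i + 1 <= INR K - INR i) by (rewrite <- S_INR, <- minus_INR by lia; apply le_INR; lia).
              assert (0 < INR i + 1) by (rewrite <- S_INR; apply lt_0_INR; lia).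
              replace x with ((INR i + 1) / (INR i + 1) * x) at 1 by (field; lra).
              apply Rmult_le_compat_r; [lra|]. unfold Rdiv. apply Rmult_le_compat_r; [|lra].
              left; apply Rinv_0_lt_compat; lra. }
            nra.
          - pose proof (pstepU_ge alpha a b Hal Ha ltac:(lia)).
            assert (y <= x).
            { rewrite Hst. rewrite S_INR, minus_INR by lia.
              assert (INR K - INR i <= INR i + 1) by (rewrite <- S_INR, <- minus_INR by lia; apply le_INR; lia).
              assert (0 < INR i + 1) by (rewrite <- S_INR; apply lt_0_INR; lia).
              replace x with ((INR i + 1) / (INR i + 1) * x) at 2 by (field; lra).
              apply Rmult_le_compat_r; [lra|]. unfold Rdiv. apply Rmult_le_compat_r; [|lra].
              left; apply Rinv_0_lt_compat; lra. }
            nra. }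
        replace ((x + y) / (2 * 2 ^ K)) with (((x + y) / 2) / 2 ^ K) by (field; lra).
        assert (pstepR alpha a b * (x / 2^K) + pstepU alpha a b * (y / 2^K) = (pstepR alpha a b * x + pstepU alpha a b * y) / 2^K) by (field; lra).
        assert ((pstepR alpha a b * x + pstepU alpha a b * y) / 2^K <= ((x + y) / 2) / 2^K).
        { unfold Rdiv. apply Rmult_le_compat_r; [left; apply Rinv_0_lt_compat; lra|]. lra. }
        lra.
Qed.







Definition u (s : nat) := C (2 * s) s / 2 ^ (2 * s).

Lemma u_step s : u (S s) = u s * (2 * INR s + 1) / (2 * INR s + 2).
Proof.
  unfold u, C.
  replace (2 * S s - S s)%nat with (S s) by lia.
  replace (2 * s - s)%nat with s by lia.
  replace (2 * S s)%nat with (S (S (2 * s))) by lia.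
  rewrite !fact_simpl, !mult_INR, !S_INR, mult_INR.
  rewrite <- !tech_pow_Rmult. simpl INR.
  assert (0 < INR (Factorial.fact s)) by apply fact_pos'.
  assert (0 < INR (Factorial.fact (2*s))) by apply fact_pos'.
  assert (0 <= INR s) by apply pos_INR.
  assert (0 < 2 ^ (2*s)) by (apply pow_lt; lra).
  field. repeat split; lra.
Qed.

Lemma u_bound s : u s * u s * (2 * INR s + 1) <= 1.
Proof.
  induction s.
  - unfold u, C. simpl. lra.
  - rewrite u_step, S_INR.
    assert (0 <= INR s) by apply pos_INR.
    assert (0 <= u s) by (unfold u; apply Rdiv_le_0_compat; [apply C_nonneg|apply pow_lt; lra]).
    assert (Hr: u s * (2 * INR s + 1) / (2 * INR s + 2) * (u s * (2 * INR s + 1) / (2 * INR s + 2)) * (2 * (INR s + 1) + 1)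
      = u s * u s * (2 * INR s + 1) * ((2 * INR s + 1) * (2 * INR s + 3) / ((2 * INR s + 2) * (2*INR s + 2)))) by (field; lra).
    rewrite Hr.
    assert (0 <= (2 * INR s + 1) * (2 * INR s + 3) / ((2 * INR s + 2) * (2*INR s + 2)) <= 1).
    { split. apply Rdiv_le_0_compat; nra. apply Rmult_le_reg_r with ((2 * INR s + 2) * (2*INR s + 2)); [nra|].
      unfold Rdiv. rewrite Rmult_assoc, Rinv_l by nra. nra. }
    assert (0 <= u s * u s * (2 * INR s + 1)) by (apply Rmult_le_pos; nra).
    nra.
Qed.

Lemma C_odd s : C (2 * s + 1) s / 2 ^ (2 * s + 1) = u s * (2 * INR s + 1) / (2 * INR s + 2).
Proof.
  unfold u, C.
  replace (2 * s + 1 - s)%nat with (S s) by lia.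
  replace (2 * s - s)%nat with s by lia.
  replace (2 * s + 1)%nat with (S (2 * s)) by lia.
  rewrite !fact_simpl, !mult_INR, !S_INR, mult_INR.
  rewrite <- !tech_pow_Rmult. simpl INR.
  assert (0 < INR (Factorial.fact s)) by apply fact_pos'.
  assert (0 < INR (Factorial.fact (2*s))) by apply fact_pos'.
  assert (0 <= INR s) by apply pos_INR.
  assert (0 < 2 ^ (2*s)) by (apply pow_lt; lra).
  field. repeat split; lra.
Qed.



Lemma sq_le_inv_sqrt x y : 0 <= x -> 0 < y -> x * x * y <= 1 -> x <= 1 / sqrt y.
Proof.
  intros Hx Hy H.
  assert (0 < sqrt y) by (apply sqrt_lt_R0; lra).
  assert (sqrt y * sqrt y = y) by (apply sqrt_sqrt; lra).
  apply Rmult_le_reg_r with (sqrt y); auto.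
  unfold Rdiv. rewrite Rmult_assoc, Rinv_l, Rmult_1_l by lra.
  assert (0 <= x * sqrt y) by nra.
  nra.
Qed.

Lemma central K : C K (Nat.div2 K) / 2 ^ K <= 1 / sqrt (INR K + 1).
Proof.
  destruct (Nat.Even_or_Odd K) as [HE|HO].
  - apply Nat.Even_double in HE. set (s := Nat.div2 K) in *. rewrite HE. unfold Nat.double.
    replace (s + s)%nat with (2 * s)%nat by lia.
    apply sq_le_inv_sqrt.
    + apply Rdiv_le_0_compat; [apply C_nonneg|apply pow_lt; lra].
    + assert (0 <= INR (2*s)) by apply pos_INR. lra.
    + fold (u s). rewrite mult_INR. replace (INR 2) with 2 by (simpl; ring). pose proof (u_bound s). lra.
  - apply Nat.Odd_double in HO. set (s := Nat.div2 K) in *. rewrite HO. unfold Nat.double.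
    replace (S (s + s))%nat with (2 * s + 1)%nat by lia.
    rewrite C_odd.
    assert (0 <= INR s) by apply pos_INR.
    assert (0 <= u s) by (unfold u; apply Rdiv_le_0_compat; [apply C_nonneg|apply pow_lt; lra]).
    apply sq_le_inv_sqrt.
    + apply Rdiv_le_0_compat; nra.
    + rewrite plus_INR, mult_INR. replace (INR 2) with 2 by (simpl; ring). replace (INR 1) with 1 by (simpl; ring). lra.
    + rewrite plus_INR, mult_INR. replace (INR 2) with 2 by (simpl; ring). replace (INR 1) with 1 by (simpl; ring).
      pose proof (u_bound s).
      replace (u s * (2 * INR s + 1) / (2 * INR s + 2) * (u s * (2 * INR s + 1) / (2 * INR s + 2)) * (2 * INR s + 1 + 1))
        with (u s * u s * (2 * INR s + 1) * ((2 * INR s + 1) / (2 * INR s + 2))) by (field; lra).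
      assert (0 <= (2 * INR s + 1) / (2 * INR s + 2) <= 1).
      { split. apply Rdiv_le_0_compat; lra. apply Rmult_le_reg_r with (2 * INR s + 2); [lra|].
        unfold Rdiv. rewrite Rmult_assoc, Rinv_l by lra. lra. }
      assert (0 <= u s * u s * (2 * INR s + 1)) by (apply Rmult_le_pos; nra).
      nra.
Qed.

Lemma div2_le K : (2 * Nat.div2 K <= K <= 2 * Nat.div2 K + 1)%nat.
Proof. pose proof (Nat.div2_odd K). destruct (Nat.odd K); simpl in H; lia. Qed.

Definition Eb (K i : nat) : R :=
  ((INR K - 2 * INR i) ^ 2 - (INR K - 2 * INR (Nat.div2 K)) ^ 2) / (2 * (INR K + 1)).

Lemma ratio K : forall t i, (i + t = Nat.div2 K)%nat -> C K i <= C K (Nat.div2 K) * exp (- Eb K i).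
Proof.
  pose proof (div2_le K) as HK.
  induction t; intros i Hi.
  - replace i with (Nat.div2 K) by lia. unfold Eb.
    replace ((INR K - 2 * INR (Nat.div2 K)) ^ 2 - (INR K - 2 * INR (Nat.div2 K)) ^ 2) with 0 by ring.
    unfold Rdiv. rewrite Rmult_0_l, Ropp_0, exp_0. lra.
  - pose proof (IHt (S i) ltac:(lia)) as IH.
    pose proof (pascal_step3 K i ltac:(lia)) as Hst.
    rewrite S_INR, minus_INR in Hst by lia.
    assert (Hv : 0 < INR i + 1) by (pose proof (pos_INR i); lra).
    assert (Hvu : INR i + 1 <= INR K - INR i) by (rewrite <- S_INR, <- minus_INR by lia; apply le_INR; lia).
    pose proof (key_ratio (INR K - INR i) (INR i + 1) Hv Hvu) as Hk.
    assert (E : C K i = (INR i + 1) / (INR K - INR i) * C K (S i)) by (rewrite Hst; field; lra).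
    rewrite E.
    assert (0 <= (INR i + 1) / (INR K - INR i)) by (apply Rdiv_le_0_compat; lra).
    apply Rle_trans with ((INR i + 1) / (INR K - INR i) * (C K (Nat.div2 K) * exp (- Eb K (S i)))).
    { apply Rmult_le_compat_l; auto. }
    apply Rle_trans with (exp (- (2 * (INR K - INR i - (INR i + 1)) / (INR K - INR i + (INR i + 1)))) * (C K (Nat.div2 K) * exp (- Eb K (S i)))).
    { apply Rmult_le_compat_r; auto. apply Rmult_le_pos; [apply C_nonneg| left; apply exp_pos]. }
    replace (C K (Nat.div2 K) * exp (- Eb K i)) with
      (exp (- (2 * (INR K - INR i - (INR i + 1)) / (INR K - INR i + (INR i + 1)))) * (C K (Nat.div2 K) * exp (- Eb K (S i)))).
    { lra. }
    rewrite Rmult_comm, Rmult_assoc, <- exp_plus. f_equal. f_equal.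
    unfold Eb. rewrite S_INR. pose proof (pos_INR K). field. lra.
Qed.

Lemma sqrt_pos_lt x : 0 < x -> 0 < sqrt x.
Proof. apply sqrt_lt_R0. Qed.

Lemma binbound K i : (1 <= K)%nat -> (i <= K)%nat ->
  C K i / 2 ^ K <= exp 1 / sqrt (INR K) * exp (- ((INR K - 2 * INR i) ^ 2) / (2 * INR K)).
Proof.
  intros HK1 HiK.
  pose proof (div2_le K) as HK.
  assert (Hsq : forall j, (j <= K)%nat -> (0 <= (INR K - 2 * INR j) ^ 2 <= INR K ^ 2)).
  { intros j Hj. pose proof (pos_INR j). pose proof (le_INR _ _ Hj). split; [apply pow2_ge_0|nra]. }
  assert (Hred : exists j, (j <= Nat.div2 K)%nat /\ C K i = C K j /\
                 (INR K - 2 * INR i) ^ 2 = (INR K - 2 * INR j) ^ 2).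
  { destruct (Compare_dec.le_lt_dec i (Nat.div2 K)) as [Hl|Hl].
    - exists i; auto.
    - exists (K - i)%nat. split; [lia|]. split; [apply pascal_step1; lia|].
      rewrite minus_INR by lia. ring. }
  destruct Hred as [j [Hj [EC Esq]]]. rewrite EC, Esq.
  assert (Hj' : (j <= K)%nat) by lia.
  pose proof (ratio K (Nat.div2 K - j) j ltac:(lia)) as Hr.
  pose proof (central K) as Hc.
  assert (Kpos : 1 <= INR K) by (replace 1 with (INR 1) by reflexivity; apply le_INR; lia).
  assert (P2 : 0 < 2 ^ K) by (apply pow_lt; lra).
  set (m := C K (Nat.div2 K)) in *.
  assert (Hm : 0 <= m) by apply C_nonneg.
  set (D := (INR K - 2 * INR j) ^ 2) in *.
  assert (Hexp : - Eb K j <= 1 + - D / (2 * INR K)).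
  { unfold Eb. fold D. set (r := INR K - 2 * INR (Nat.div2 K)).
    assert (0 <= r <= 1).
    { unfold r. pose proof (le_INR _ _ (proj1 HK)) as A1. pose proof (le_INR _ _ (proj2 HK)) as A2.
      rewrite mult_INR in A1. rewrite plus_INR, mult_INR in A2.
      replace (INR 2) with 2 in A1, A2 by (simpl; ring). replace (INR 1) with 1 in A2 by reflexivity. lra. }
    assert (HD : D <= INR K ^ 2) by (unfold D; apply Hsq; auto).
    assert (1 + - D / (2 * INR K) - - ((D - r ^ 2) / (2 * (INR K + 1))) =
            (2 * INR K * INR K + 2 * INR K - D - r^2 * INR K) / (2 * INR K * (INR K + 1))) by (field; lra).
    assert (0 <= (2 * INR K * INR K + 2 * INR K - D - r^2 * INR K) / (2 * INR K * (INR K + 1))).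
    { assert (r ^ 2 <= 1) by nra. assert (r^2 * INR K <= INR K) by nra.
      assert (INR K ^ 2 = INR K * INR K) by ring.
      apply Rdiv_le_0_compat; [|nra]. nra. }
    lra. }
  apply Rle_trans with (m * exp (- Eb K j) / 2 ^ K).
  { unfold Rdiv. apply Rmult_le_compat_r; [left; apply Rinv_0_lt_compat; lra|]. exact Hr. }
  apply Rle_trans with (m / 2 ^ K * exp (1 + - D / (2 * INR K))).
  { replace (m * exp (- Eb K j) / 2 ^ K) with (m / 2 ^ K * exp (- Eb K j)) by (field; lra).
    apply Rmult_le_compat_l; [apply Rdiv_le_0_compat; lra|].
    destruct Hexp as [Hlt|Heq]; [left; apply exp_increasing; auto| rewrite Heq; lra]. }
  rewrite exp_plus.
  assert (Hs1 : 1 / sqrt (INR K + 1) <= 1 / sqrt (INR K)).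
  { unfold Rdiv. rewrite !Rmult_1_l. apply Rinv_le_contravar. apply sqrt_pos_lt; lra.
    apply sqrt_le_1; lra. }
  assert (0 < exp 1) by apply exp_pos. assert (0 < exp (- D / (2 * INR K))) by apply exp_pos.
  assert (m / 2 ^ K <= 1 / sqrt (INR K)) by lra.
  replace (exp 1 / sqrt (INR K) * exp (- D / (2 * INR K))) with (1 / sqrt (INR K) * (exp 1 * exp (- D / (2 * INR K)))).
  2:{ assert (0 < sqrt (INR K)) by (apply sqrt_pos_lt; lra). field. lra. }
  apply Rmult_le_compat_r; [nra|]. auto.
Qed.

Lemma part2 (L s : R) : 0 < s -> L <> 0 ->
  exp 1 / sqrt s * exp (- (L ^ 2) / s) <= exp 1 / Rabs L * exp (- (L ^ 2) / (2 * s)).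
Proof.
  intros Hs HL.
  set (y := L ^ 2 / (2 * s)).
  assert (Hy : 0 <= y) by (unfold y; apply Rdiv_le_0_compat; [apply pow2_ge_0|lra]).
  assert (E1 : - (L ^ 2) / s = - y + - y) by (unfold y; field; lra).
  assert (E2 : - (L ^ 2) / (2 * s) = - y) by (unfold y; field; lra).
  rewrite E1, E2, exp_plus.
  assert (HaL : 0 < Rabs L) by (apply Rabs_pos_lt; auto).
  assert (Hsq : 0 < sqrt s) by (apply sqrt_lt_R0; auto).
  assert (Hss : sqrt s * sqrt s = s) by (apply sqrt_sqrt; lra).
  assert (Hey : 0 < exp (- y)) by apply exp_pos.
  assert (He1 : 0 < exp 1) by apply exp_pos.
  assert (Hk : Rabs L * exp (- y) <= sqrt s).
  { assert (H2y := exp_ineq1_le (2 * y)).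
    assert (Hm : exp (2 * y) * (exp (-y) * exp (-y)) = 1).
    { rewrite <- !exp_plus. replace (2 * y + (- y + - y)) with 0 by ring. apply exp_0. }
    assert (HL2 : Rabs L * Rabs L = 2 * y * s) by (rewrite <- Rabs_mult, Rabs_right by nra; unfold y; field; lra).
    assert ((Rabs L * exp (- y)) * (Rabs L * exp (- y)) <= sqrt s * sqrt s).
    { rewrite Hss.
      replace ((Rabs L * exp (- y)) * (Rabs L * exp (- y))) with (2 * y * s * (exp (-y) * exp (-y))) by (rewrite <- HL2; ring).
      assert (0 < exp (-y) * exp (-y)) by nra.
      assert (2 * y * (exp (-y) * exp (-y)) <= 1) by nra.
      nra. }
    nra. }
  replace (exp 1 / sqrt s * (exp (- y) * exp (- y))) with (exp 1 * exp (-y) * (exp (-y) / sqrt s)) by (field; lra).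
  replace (exp 1 / Rabs L * exp (- y)) with (exp 1 * exp (-y) * (1 / Rabs L)) by (field; lra).
  apply Rmult_le_compat_l; [nra|].
  apply Rmult_le_reg_r with (Rabs L * sqrt s); [nra|].
  replace (exp (- y) / sqrt s * (Rabs L * sqrt s)) with (Rabs L * exp (- y)) by (field; lra).
  replace (1 / Rabs L * (Rabs L * sqrt s)) with (sqrt s) by (field; lra).
  exact Hk.
Qed.

Lemma part1 (alpha A L : R) (n a b : nat) : 1 < alpha ->
    INR a = A + L -> INR b = A - L ->
    A < INR n -> Rabs L <= A - 1 ->
    bingo alpha a b n n <= exp 1 / sqrt (INR n - A) * exp (- (L ^ 2) / (INR n - A)).
Proof.
  intros Hal Ha Hb HAn HL.
  assert (Hs : 0 < INR n - A) by lra.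
  assert (Hrhs : 0 <= exp 1 / sqrt (INR n - A) * exp (- (L ^ 2) / (INR n - A))).
  { apply Rmult_le_pos; [apply Rdiv_le_0_compat; [left; apply exp_pos| apply sqrt_lt_R0; lra]|left; apply exp_pos]. }
  assert (HL1 : - (A - 1) <= L <= A - 1) by (split; [pose proof (Rabs_pos L); pose proof (Rle_abs (-L)); rewrite Rabs_Ropp in *; lra | pose proof (Rle_abs L); lra]).
  assert (Ha1 : (1 <= a)%nat) by (apply INR_le; simpl; lra).
  assert (Hb1 : (1 <= b)%nat) by (apply INR_le; simpl; lra).
  assert (Hab : (a + b < n + n)%nat) by (apply INR_lt; rewrite !plus_INR; lra).
  unfold bingo. replace (Nat.leb (a + b) (n + n)) with true by (symmetry; apply Nat.leb_le; lia).
  destruct (Compare_dec.le_lt_dec a n) as [Han|Han]; [|rewrite at_after_zero_l by lia; auto].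
  destruct (Compare_dec.le_lt_dec b n) as [Hbn|Hbn]; [|rewrite at_after_zero_r by lia; auto].
  set (K := (n + n - (a + b))%nat).
  pose proof (dom alpha n ltac:(lra) K a b ltac:(unfold K; lia) Ha1 Hb1 Han Hbn) as H1.
  pose proof (binbound K (n - a) ltac:(unfold K; lia) ltac:(unfold K; lia)) as H2.
  assert (EK : INR K = 2 * (INR n - A)).
  { unfold K. rewrite minus_INR by lia. rewrite !plus_INR. lra. }
  assert (Ed : INR K - 2 * INR (n - a) = 2 * L).
  { rewrite EK, minus_INR by lia. lra. }
  rewrite Ed, EK in H2.
  replace (- ((2 * L) ^ 2) / (2 * (2 * (INR n - A)))) with (- (L ^ 2) / (INR n - A)) in H2 by (field; lra).
  eapply Rle_trans; [exact H1|]. eapply Rle_trans; [exact H2|].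
  apply Rmult_le_compat_r; [left; apply exp_pos|].
  unfold Rdiv. apply Rmult_le_compat_l; [left; apply exp_pos|].
  apply Rinv_le_contravar; [apply sqrt_lt_R0; lra|]. apply sqrt_le_1; lra.
Qed.

Theorem mainTheorem11 :
  exists C C' : R,
  forall (alpha : R), 1 < alpha ->
  forall (A L : R) (n a b : nat),
    INR a = A + L -> INR b = A - L ->
    A < INR n -> Rabs L <= A - 1 ->
    bingo alpha a b n n <= C / sqrt (INR n - A) * exp (- (L ^ 2) / (INR n - A)) /\
    (L <> 0 ->
     bingo alpha a b n n <= C' / Rabs L * exp (- (L ^ 2) / (2 * (INR n - A)))).
Proof.
  exists (exp 1), (exp 1).
  intros alpha Hal A L n a b Ha Hb HAn HL.
  pose proof (part1 alpha A L n a b Hal Ha Hb HAn HL) as P.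
  split; [exact P|].
  intros HL0. eapply Rle_trans; [exact P|]. apply part2; [lra|auto].
Qed.
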